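(* Let $s$ be a positive integer, let $\mathcal F$ be a hypergraph on a vertex set $V$, and let $i$ be an integer with $0<i<|V|$ such that $\wp(\mathcal F,i)\le\frac{|\mathcal F|}{2^s|V|^{s-1}}$. Then there are at least $i^s$ tuples $U\in V^s$ with $|\mathcal F(U)|\ge\frac{|\mathcal F|}{(2|V|)^s}$.
   Context: For a vertex set $I$, $\mathcal F[I]=\{e\in\mathcal F:e\subseteq I\}$ and $\wp(\mathcal F,i)=\max_{|I|=i}|\mathcal F[I]|$. The link of a vertex set $I$ is $\mathcal F(I)=\{e\setminus I: I\subseteq e\in\mathcal F\}$ (a hypergraph on $V\setminus I$). For a tuple $U$ of vertices (entries may repeat), $|U|$ denotes the number of distinct vertices in $U$ and $\mathcal F(U)$ is the link of the set of distinct vertices of $U$. *)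

(* Defs.v *)
From mathcomp Require Import all_boot.
Set Implicit Arguments. Unset Strict Implicit. Unset Printing Implicit Defensive.

(* A hypergraph on the finite vertex set V = [set: T] is a set of edges,
   each edge a subset of V. *)

Definition induced (T : finType) (F : {set {set T}}) (I : {set T}) : {set {set T}} :=
  [set e in F | e \subset I].

Definition wp (T : finType) (F : {set {set T}}) (i : nat) : nat :=
  \max_(I : {set T} | #|I| == i) #|induced F I|.

Definition link (T : finType) (F : {set {set T}}) (I : {set T}) : {set {set T}} :=
  [set e :\: I | e in [set e in F | I \subset e]].

Definition tlink (T : finType) (s : nat) (F : {set {set T}}) (U : s.-tuple T)
  : {set {set T}} := link F [set x in U].

(* Main.v *)
Require Import Defs.
From mathcomp Require Import all_boot zify.

Section S.
Variables (T : finType) (F : {set {set T}}).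

Definition D (I : {set T}) := [set e in F | I \subset e].

Lemma card_link I : #|link F I| = #|D I|.
Proof.
rewrite /link card_in_imset // => e1 e2; rewrite !inE => /andP[_ s1] /andP[_ s2] h.
apply/setP=> x; case: (boolP (x \in I)) => xI.
  by rewrite (subsetP s1) ?(subsetP s2).
by move/setP: h => /(_ x); rewrite !inE xI.
Qed.

Lemma card_bigcup_le (A : {set T}) (G : T -> {set {set T}}) :
  #|\bigcup_(v in A) G v| <= \sum_(v in A) #|G v|.
Proof.
elim/big_rec2: _ => [|v n U _ leUn]; first by rewrite cards0.
by rewrite (leq_trans (leq_card_setU (G v) U).1) ?leq_add2l.
Qed.

Lemma ext_card (B : {set T}) j : #|B| <= j -> j <= #|{:T}| -> exists J : {set T}, B \subset J /\ #|J| = j.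
Proof.
move=> h1 h2; move: {2}(j - #|B|) (erefl (j - #|B|)) => d.
elim: d B h1 => [|d IH] B h1 hd.
  by exists B; split => //; lia.
have: 0 < #|~: B| by have := cardsC B; lia.
rewrite card_gt0 => /set0Pn[x]; rewrite inE => xB.
have [J [sJ cJ]] := IH (x |: B) ltac:(rewrite cardsU1 xB; lia) ltac:(rewrite cardsU1 xB; lia).
by exists J; split => //; apply: subset_trans sJ; apply: subsetUr.
Qed.

Lemma step (s i k : nat) (I : {set T}) :
  i < #|{:T}| -> wp F i * (2 ^ s * #|{:T}| ^ (s - 1)) <= #|F| ->
  k < s -> #|F| <= #|D I| * (2 * #|{:T}|) ^ k ->
  i <= #|[set v | #|F| <= #|D (v |: I)| * (2 * #|{:T}|) ^ k.+1]|.
Proof.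
move=> hi hw hk hI.
set n := #|{:T}|; set m := #|F|; set B := [set v | _ <= _].
have n0 : 0 < n by lia.
case: (posnP m) => [m0|m0].
  have -> : B = setT by apply/setP => v; rewrite !inE m0.
  by rewrite cardsT; lia.
rewrite leqNgt; apply/negP => hB.
have [J [sBJ cJ]] := @ext_card B i (ltnW hB) (ltnW hi).
have sIB : I \subset B.
  apply/subsetP => x xI; rewrite inE (setUidPr _); last by rewrite sub1set.
  apply: (leq_trans hI); rewrite leq_mul2l expnS leq_pmull; first by rewrite orbT.
  lia.
have sD : D I \subset induced F J :|: \bigcup_(v in ~: B) D (v |: I).
  apply/subsetP => e; rewrite !inE => /andP[eF sIe].
  case: (boolP (e \subset B)) => eB.
    by rewrite eF (subset_trans eB sBJ).
  apply/orP; right; move/subsetPn: eB => [v ve vB].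
  apply/bigcupP; exists v; first by rewrite inE.
  by rewrite inE eF subUset sub1set ve sIe.
have hW : #|induced F J| <= wp F i.
  by rewrite /wp (bigD1 J) ?cJ ?eqxx //= leq_maxl.
set P := (2 * n) ^ k.+1.
have hS : \sum_(v in ~: B) #|D (v |: I)| * P <= n * (m - 1).
  apply: (@leq_trans (\sum_(v in ~: B) (m - 1))).
    apply: leq_sum => v; rewrite !inE -ltnNge; lia.
  rewrite sum_nat_const; apply: leq_mul => //.
  by apply: max_card.
have hDI : #|D I| <= #|induced F J| + \sum_(v in ~: B) #|D (v |: I)|.
  apply: (leq_trans (subset_leq_card sD)).
  apply: (leq_trans (leq_card_setU _ _).1).
  by rewrite leq_add2l card_bigcup_le.
have hPQ : P <= (2 * n) ^ s by apply: leq_pexp2l; lia.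
have hQ : (2 * n) ^ s = n * (2 ^ s * n ^ (s - 1)).
  have e : n ^ s = n ^ (s - 1) * n by rewrite -expnSr; congr (_ ^ _); lia.
  rewrite expnMn e; nia.
have hP : P = 2 * n * (2 * n) ^ k by rewrite /P expnS.
rewrite -big_distrl /= in hS.
set S := \sum_(v in ~: B) _ in hS hDI.
set W := wp F i in hw hW.
set X := (2 * n) ^ k in hI hP.
set Y := 2 ^ s * n ^ (s - 1) in hw hQ.
set d := #|D I| in hI hDI.
have h1 : d * P <= W * P + S * P.
  by rewrite -mulnDl; apply: leq_mul => //; apply: (leq_trans hDI); rewrite leq_add2r.
have h2 : W * P <= n * m.
  apply: (leq_trans (leq_mul (leqnn W) hPQ)); rewrite hQ mulnCA leq_mul2l; lia.
have h3 : 2 * n * m <= d * P.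
  by rewrite hP mulnCA leq_mul2l hI orbT.
lia.
Qed.

Definition A (k : nat) := [set t : k.-tuple T | #|F| <= #|D [set x in t]| * (2 * #|{:T}|) ^ k].

Lemma count_A (s i : nat) :
  i < #|{:T}| -> wp F i * (2 ^ s * #|{:T}| ^ (s - 1)) <= #|F| ->
  forall k, k <= s -> i ^ k <= #|A k|.
Proof.
move=> hi hw; elim => [|k IH] hk.
  have -> : A 0 = setT.
    apply/setP => t; rewrite !inE tuple0 muln1.
    have -> : [set x in [tuple]] = set0 :> {set T} by apply/setP => x; rewrite !inE.
    apply: subset_leq_card; apply/subsetP => e eF; by rewrite inE eF sub0set.
  by rewrite cardsT card_tuple.
set G := fun t : k.-tuple T => [set v | #|F| <= #|D (v |: [set x in t])| * (2 * #|{:T}|) ^ k.+1].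
set Ps := [set p : k.-tuple T * T | (p.1 \in A k) && (p.2 \in G p.1)].
have cP : #|Ps| = \sum_(t in A k) #|G t|.
  rewrite -sum1_card (eq_bigl (fun p : k.-tuple T * T => (p.1 \in A k) && (p.2 \in G p.1))); last first.
    by move=> p; rewrite inE.
  rewrite -(pair_big_dep (fun t => t \in A k) (fun t v => v \in G t) (fun _ _ => 1)) /=.
  by apply: eq_bigr => t _; rewrite sum1_card.
have h1 : i ^ k.+1 <= #|Ps|.
  rewrite cP expnS; apply: (@leq_trans (\sum_(t in A k) i)); last first.
    apply: leq_sum => t; rewrite inE => ht.
    exact: (@step s i k _ hi hw hk ht).
  by rewrite sum_nat_const mulnC leq_mul2r IH ?orbT //; lia.
apply: (leq_trans h1).
pose f := fun p : k.-tuple T * T => [tuple of p.2 :: p.1].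
have finj : injective f.
  move=> [t1 v1] [t2 v2] /(congr1 val) /= [-> e]; congr pair; exact: val_inj.
rewrite -(card_imset _ finj); apply: subset_leq_card; apply/subsetP => u.
move=> /imsetP[[t v]]; rewrite inE /= => /andP[_ hv] ->.
rewrite inE; move: hv; rewrite /G inE.
by have -> : [set x in f (t, v)] = v |: [set x in t] by apply/setP => x; rewrite !inE.
Qed.
End S.

Theorem lemma2p3 (T : finType) (F : {set {set T}}) (s i : nat) :
  0 < s -> 0 < i -> i < #|T| ->
  wp F i * (2 ^ s * #|T| ^ (s - 1)) <= #|F| ->
  i ^ s <= #|[set U : s.-tuple T | #|F| <= #|tlink F U| * (2 * #|T|) ^ s]|.
Proof.
move=> _ _ hi hw.
have := @count_A T F s i hi hw s (leqnn s).
have -> // : A T F s = [set U : s.-tuple T | #|F| <= #|tlink F U| * (2 * #|T|) ^ s].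
by apply/setP => U; rewrite !inE /tlink card_link.
Qed.
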